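(* For a prime $p$ let $M_p=\{(n,p^a,np^a): n\in\mathbb{N},\ a\in\mathbb{N}\}$. There is a positive existential formula $\varphi(x,y,w)$ in the language $\{0,1,+,R\}$ such that for every prime $p$ and all $x,y,w\in\mathbb{N}$, the structure $\mathfrak{N}_p=(\mathbb{N};0,1,+,\mid_p)$ (with $R$ interpreted as $\mid_p$) satisfies $\varphi(x,y,w)$ if and only if $(x,y,w)\in M_p$.
   Context: $\mathbb{N}$ contains $0$. For a prime $p$, $x\mid_p y$ means $y=\pm xp^s$ for some $s\in\mathbb{Z}$. *)

(* Defs.v *)
From mathcomp Require Import all_boot all_order all_algebra.
Set Implicit Arguments. Unset Strict Implicit. Unset Printing Implicit Defensive.
Import GRing.Theory Num.Theory.

Definition pdiv (p x y : nat) : Prop :=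
  exists (s : int) (e : bool),
    ((y%:R : rat) = (-1) ^+ e * (x%:R : rat) * (p%:R : rat) ^ s)%R.

Inductive term : Type :=
  | TVar : nat -> term
  | TZero : term
  | TOne : term
  | TPlus : term -> term -> term.

Inductive pef : Type :=
  | FEq : term -> term -> pef
  | FR : term -> term -> pef
  | FAnd : pef -> pef -> pef
  | FOr : pef -> pef -> pef
  | FEx : nat -> pef -> pef.

Fixpoint teval (e : nat -> nat) (t : term) : nat :=
  match t with
  | TVar i => e i
  | TZero => 0
  | TOne => 1
  | TPlus t1 t2 => teval e t1 + teval e t2
  end.

Definition upd (e : nat -> nat) (i v : nat) : nat -> nat :=
  fun j => if j == i then v else e j.

Fixpoint sat (p : nat) (e : nat -> nat) (f : pef) : Prop :=
  match f with
  | FEq t1 t2 => teval e t1 = teval e t2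
  | FR t1 t2 => pdiv p (teval e t1) (teval e t2)
  | FAnd f1 f2 => sat p e f1 /\ sat p e f2
  | FOr f1 f2 => sat p e f1 \/ sat p e f2
  | FEx i f1 => exists v : nat, sat p (upd e i v) f1
  end.

Definition Mp (p x y w : nat) : Prop :=
  exists n a : nat, x = n /\ y = p ^ a /\ w = n * p ^ a.

(* Main.v *)
Require Import Defs.
From mathcomp Require Import all_boot all_order all_algebra.
From mathcomp Require Import zify ring.
Import Order.TTheory GRing.Theory Num.Theory.

Lemma core p X S T U : 1 < p -> 0 < X ->
  X * p ^ S + p ^ T = (X + 1) * p ^ U -> S = T \/ p %| X.
Proof.
move=> p1 X0 E.
have pp : forall n, 0 < p ^ n by move=> n; rewrite expn_gt0; lia.
case: (ltngtP S T) => ST; last by left.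
-
  right.
  case: (leqP U S) => US.
  + exfalso.
    have h1 : p ^ U <= p ^ S by rewrite leq_exp2l.
    have h2 : p ^ S.+1 <= p ^ T by rewrite leq_exp2l.
    have h3 : p ^ S.+1 = p * p ^ S by rewrite expnS.
    have h4 := pp S.
    nia.
  + have d1 : p ^ S.+1 %| (X + 1) * p ^ U by apply: dvdn_mull; rewrite dvdn_Pexp2l.
    have d2 : p ^ S.+1 %| p ^ T by rewrite dvdn_Pexp2l.
    have d3 : p ^ S.+1 %| X * p ^ S + p ^ T by rewrite E.
    by move: d3; rewrite dvdn_addl // expnSr [X * _]mulnC dvdn_pmul2l // expn_gt0; lia.
-
  exfalso.
  case: (leqP U T) => UT.
  + have h1 : p ^ U <= p ^ T by rewrite leq_exp2l.
    have h2 : p ^ T.+1 <= p ^ S by rewrite leq_exp2l.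
    have h3 : p ^ T.+1 = p * p ^ T by rewrite expnS.
    have h4 := pp T.
    have h5 : X * p ^ S >= X * (2 * p ^ T).
      by rewrite leq_mul2l; apply/orP; right; apply: leq_trans h2; rewrite h3 leq_mul2r; lia.
    have h6 : (X + 1) * p ^ U <= (X + 1) * p ^ T by rewrite leq_mul2l; lia.
    nia.
  + have d1 : p ^ T.+1 %| (X + 1) * p ^ U by apply: dvdn_mull; rewrite dvdn_Pexp2l.
    have d2 : p ^ T.+1 %| X * p ^ S by apply: dvdn_mull; rewrite dvdn_Pexp2l.
    have d3 : p ^ T.+1 %| X * p ^ S + p ^ T by rewrite E.
    move: d3; rewrite dvdn_addr // dvdn_Pexp2l //; lia.
Qed.

Definition pd (p x y : nat) := exists i j : nat, y * p ^ i = x * p ^ j.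

Lemma step p a X W : 1 < p -> 0 < X -> pd p X W -> pd p (X + 1) (W + p ^ a) ->
  W = X * p ^ a \/ p %| X.
Proof.
move=> p1 X0 [i [j E1]] [i' [j' E2]].
have E3 : X * p ^ (j + i') + p ^ (a + i + i') = (X + 1) * p ^ (j' + i).
  rewrite !expnD mulnA -E1 (mulnA (X+1)) -E2.
  rewrite !mulnDl; ring.
case: (@core p X _ _ _ p1 X0 E3) => [h|]; last by right.
left.
have hj : j = a + i by lia.
apply/eqP; rewrite -(eqn_pmul2r (_ : 0 < p ^ i)); last by rewrite expn_gt0; lia.
by rewrite E1 hj expnD mulnA.
Qed.
Lemma pdiv_pd p x y : 0 < p -> Defs.pdiv p x y -> pd p x y.
Proof.
move=> p0 [s [e E]].
have pR : (p%:R : rat) != 0%R by rewrite pnatr_eq0 -lt0n.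
case: e E => /= E.
- have hy : (0 <= (y%:R : rat))%R by [].
  have hx : (0 <= (x%:R : rat) * (p%:R : rat) ^ s)%R.
    by apply: mulr_ge0 => //; apply: exprz_ge0.
  have E' : (y%:R : rat) = (- ((x%:R : rat) * (p%:R : rat) ^ s))%R by rewrite E expr1 mulN1r mulNr.
  have v0 : ((x%:R : rat) * (p%:R : rat) ^ s)%R = 0%R.
    by apply/eqP; rewrite eq_le hx -oppr_ge0 -E' hy.
  have : (y%:R : rat) = 0%R /\ ((x%:R : rat) * (p%:R : rat) ^ s)%R = 0%R.
    by rewrite E' v0 oppr0.
  case=> /eqP; rewrite pnatr_eq0 => /eqP -> /eqP; rewrite mulf_eq0 pnatr_eq0 expfz_eq0 (negbTE pR) andbF orbF => /eqP ->.
  by exists 0, 0.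
- move: E; rewrite expr0 mul1r.
  case: s => n E.
  + exists 0, n; apply/eqP; rewrite expn0 muln1 -(eqr_nat rat) natrM natrX E. by [].
  + exists (n.+1), 0; apply/eqP; rewrite expn0 muln1 -(eqr_nat rat) natrM natrX E /=.
    rewrite NegzE -invr_expz -mulrA mulVf ?mulr1 //.
    by rewrite expfz_neq0.
Qed.

Lemma pd_pdiv p x y : 0 < p -> pd p x y -> Defs.pdiv p x y.
Proof.
move=> p0 [i [j E]].
have pR : (p%:R : rat) != 0%R by rewrite pnatr_eq0 -lt0n.
exists (j%:Z - i%:Z)%R, false; rewrite /= expr0 mul1r.
rewrite expfzDr // -invr_expz -!exprnP.
have : (y%:R * (p%:R : rat) ^+ i = x%:R * p%:R ^+ j)%R by rewrite -!natrX -!natrM E.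
move=> H; by rewrite -(mulfK (expf_neq0 i pR) (y%:R : rat)%R) H -mulrA.
Qed.

Theorem lemma4p7 :
  exists phi : pef,
    forall p : nat, prime p ->
    forall (x y w : nat) (e : nat -> nat),
      e 0 = x -> e 1 = y -> e 2 = w ->
      (sat p e phi <-> Mp p x y w).
Proof.
exists (FAnd (FR TOne (TVar 1)) (FAnd (FR (TVar 0) (TVar 2))
  (FAnd (FR (TPlus (TVar 0) TOne) (TPlus (TVar 2) (TVar 1)))
        (FR (TPlus (TPlus (TVar 0) TOne) TOne) (TPlus (TPlus (TVar 2) (TVar 1)) (TVar 1)))))).
move=> p pp x y w e e0 e1 e2 /=; rewrite e0 e1 e2.
have p1 : 1 < p := prime_gt1 pp.
have p0 : 0 < p by lia.
split.
- case=> /(@pdiv_pd p _ _ p0) [i [j Ey]] [/(@pdiv_pd p _ _ p0) H1 [/(@pdiv_pd p _ _ p0) H2 /(@pdiv_pd p _ _ p0) H3]].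
  have : y %| p ^ j by rewrite -[p ^ j]mul1n -Ey dvdn_mulr.
  case/(dvdn_pfactor _ _ pp) => a _ ya.
  rewrite ya in H2 H3.
  exists x, a; split => //; split => //.
  case: (posnP x) => [x0|xpos].
  + move: H1 => [i1 [j1]]; rewrite x0 mul0n => /eqP; rewrite muln_eq0 => /orP [/eqP -> //|].
    by rewrite expn_eq0; lia.
  + case: (@step p a x w p1 xpos H1 H2) => // px.
    case: (@step p a (x + 1) (w + p ^ a) p1 (ltn_addl x (ltnSn 0)) H2 H3) => [h|px1].
    * by apply/eqP; rewrite -(eqn_add2r (p ^ a)) h mulnDl mul1n.
    * exfalso; move: px1; rewrite dvdn_addr // dvdn1; lia.
- case=> n [a [-> [-> ->]]].
  split; [|split; [|split]]; apply: (@pd_pdiv p) => //; exists 0, a; rewrite expn0 muln1; ring.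
Qed.
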